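(* Let $d_n$ be the number of FQ-legal index sets contained in $\{1,\dots,n\}$ (including the empty set). Let $r_1\approx1.39704$ be the largest (real) root of $r^7-r^6-r^2-1=0$ and $r_2\approx1.07378$ the modulus of the next largest roots (a complex conjugate pair; all other roots have modulus at most $1$). Then there is a constant $\beta_1>0$ such that \[ d_n=\beta_1 r_1^n\left[1+O\bigl((r_2/r_1)^n\bigr)\right]. \]
   Context: An FQ-legal index set is a finite set $S$ of positive integers such that no two elements of $S$ differ by $1$, $3$ or $4$, and $S$ does not contain both $1$ and $3$. (These are exactly the index sets of FQ-legal decompositions with respect to the Fibonacci Quilt sequence.) *)

(* Defs.v *)
From Stdlib Require Import Reals List Arith Bool.
Import ListNotations.

(** FQ-legal index sets, represented as duplicate-free lists of positive
    integers.  S is FQ-legal iff no two elements differ by 1, 3 or 4 and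
    S does not contain both 1 and 3. *)
Definition memb (x : nat) (S : list nat) : bool := existsb (Nat.eqb x) S.

Definition fq_legalb (S : list nat) : bool :=
  forallb (fun a =>
    forallb (fun b =>
      negb (Nat.eqb b (a + 1) || Nat.eqb b (a + 3) || Nat.eqb b (a + 4))) S) S
  && negb (memb 1 S && memb 3 S).

(** All sublists of a list (for a duplicate-free list l these are exactly the
    subsets of the set of elements of l, each listed once). *)
Fixpoint sublists {A : Type} (l : list A) : list (list A) :=
  match l with
  | [] => [[]]
  | x :: t => let r := sublists t in r ++ map (cons x) r
  end.

Definition d (n : nat) : nat :=
  length (filter fq_legalb (sublists (seq 1 n))).

Open Scope R_scope.

(** Minimal complex arithmetic on R*R, to talk about complex roots of
    r^7 - r^6 - r^2 - 1. *)
Definition Cmul (z w : R * R) : R * R :=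
  (fst z * fst w - snd z * snd w, fst z * snd w + snd z * fst w).
Fixpoint Cpow (z : R * R) (n : nat) : R * R :=
  match n with O => (1, 0) | S k => Cmul z (Cpow z k) end.
Definition Cmod (z : R * R) : R := sqrt (fst z ^ 2 + snd z ^ 2).

Definition FQpolyC (z : R * R) : R * R :=
  (fst (Cpow z 7) - fst (Cpow z 6) - fst (Cpow z 2) - 1,
   snd (Cpow z 7) - snd (Cpow z 6) - snd (Cpow z 2)).
Definition is_FQroot (z : R * R) : Prop := FQpolyC z = (0, 0).

Definition FQpolyR (r : R) : R := r ^ 7 - r ^ 6 - r ^ 2 - 1.

(* Main.v *)
Require Import Defs.
From Stdlib Require Import Reals List Arith.
From Stdlib Require Import List Arith Bool Lia.
Open Scope nat_scope.
Import ListNotations.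

Definition Pab (a b : nat) : bool :=
  negb (Nat.eqb b (a + 1) || Nat.eqb b (a + 3) || Nat.eqb b (a + 4)).
Definition good (s : list nat) : bool :=
  forallb (fun a => forallb (fun b => Pab a b) s) s.

Definition Gp (F : nat -> bool) (s : list nat) : bool :=
  good s && forallb (fun y => negb (F y)) s.

Definition G (k L : nat) (F : nat -> bool) : nat :=
  length (filter (Gp F) (sublists (seq k L))).

Lemma sublists_incl {A} (l s : list A) : In s (sublists l) -> incl s l.
Proof.
  revert s; induction l as [|x t IH]; simpl; intros s H.
  - destruct H as [<-|[]]. intros y [].
  - apply in_app_or in H; destruct H as [H|H].
    + intros y Hy; right; exact (IH s H y Hy).
    + apply in_map_iff in H; destruct H as [s' [<- Hs']].
      intros y [<-|Hy]; [left; reflexivity| right; exact (IH s' Hs' y Hy)].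
Qed.

Lemma forallb_and {A} (f g : A -> bool) (s : list A) :
  forallb (fun a => f a && g a) s = forallb f s && forallb g s.
Proof.
  induction s; simpl; auto. rewrite IHs. destruct (f a), (g a); simpl; auto.
  destruct (forallb f s); auto.
Qed.

Lemma forallb_true_in {A} (f : A -> bool) (s : list A) :
  (forall x, In x s -> f x = true) -> forallb f s = true.
Proof. intros H; apply forallb_forall; auto. Qed.

Lemma forallb_ext_in {A} (f g : A -> bool) (s : list A) :
  (forall x, In x s -> f x = g x) -> forallb f s = forallb g s.
Proof.
  induction s; simpl; intros H; auto. rewrite H by auto. rewrite IHs; auto.
Qed.

Lemma good_cons x s : (forall y, In y s -> x < y) ->
  good (x :: s) = forallb (Pab x) s && good s.
Proof.
  intros Hs. unfold good. simpl.
  assert (Pab x x = true) as ->.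
  { unfold Pab. repeat rewrite (proj2 (Nat.eqb_neq _ _)) by lia. reflexivity. }
  simpl. rewrite forallb_and.
  rewrite (forallb_true_in (fun a => Pab a x)).
  2:{ intros y Hy. specialize (Hs y Hy). unfold Pab.
      repeat rewrite (proj2 (Nat.eqb_neq _ _)) by lia. reflexivity. }
  simpl. reflexivity.
Qed.

Lemma filter_length_map {A B} (p : B -> bool) (h : A -> B) (r : list A) :
  length (filter p (map h r)) = length (filter (fun x => p (h x)) r).
Proof. induction r; simpl; auto. destruct (p (h a)); simpl; auto. Qed.

Lemma filter_length_ext_in {A} (p q : A -> bool) (r : list A) :
  (forall x, In x r -> p x = q x) -> length (filter p r) = length (filter q r).
Proof.
  induction r; simpl; intros H; auto. rewrite H by auto.
  destruct (q a); simpl; rewrite IHr; auto.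
Qed.

Lemma filter_length_false {A} (r : list A) :
  length (filter (fun _ => false) r) = 0.
Proof. induction r; simpl; auto. Qed.

Definition Fadd (F : nat -> bool) (k : nat) : nat -> bool :=
  fun y => F y || Nat.eqb y (k + 1) || Nat.eqb y (k + 3) || Nat.eqb y (k + 4).

Lemma G_step k L F :
  G k (S L) F = G (S k) L F + (if F k then 0 else G (S k) L (Fadd F k)).
Proof.
  unfold G. simpl. rewrite filter_app, length_app.
  f_equal. rewrite filter_length_map.
  destruct (F k) eqn:Fk.
  - rewrite (filter_length_ext_in _ (fun _ => false)). apply filter_length_false.
    intros s Hs. unfold Gp. simpl. rewrite Fk. simpl. destruct (good (k :: s)); auto.
  - apply filter_length_ext_in. intros s Hs.
    assert (Hlt : forall y, In y s -> k < y).
    { intros y Hy. apply (sublists_incl _ _ Hs) in Hy. apply in_seq in Hy. lia. }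
    unfold Gp. rewrite good_cons by auto. simpl. rewrite Fk. simpl.
    unfold Fadd.
    rewrite (forallb_ext_in (fun y => negb (F y || (y =? k + 1) || (y =? k + 3) || (y =? k + 4)))
               (fun y => negb (F y) && Pab k y)).
    2:{ intros y _. unfold Pab. destruct (F y); simpl; auto. }

    rewrite forallb_and.
    destruct (forallb (Pab k) s), (good s), (forallb (fun y => negb (F y)) s); auto.
Qed.

Lemma G_true k L F : F k = true -> G k (S L) F = G (S k) L F.
Proof. intros H; rewrite G_step, H; lia. Qed.
Lemma G_false k L F : F k = false -> G k (S L) F = G (S k) L F + G (S k) L (Fadd F k).
Proof. intros H; rewrite G_step, H; lia. Qed.

Lemma G_agree k L F F' : (forall y, k <= y -> F y = F' y) -> G k L F = G k L F'.
Proof.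
  intros H. unfold G. apply filter_length_ext_in. intros s Hs. unfold Gp. f_equal.
  apply forallb_ext_in. intros y Hy. apply (sublists_incl _ _ Hs) in Hy.
  apply in_seq in Hy. rewrite H by lia. auto.
Qed.

Definition F0 : nat -> bool := fun _ => false.

Lemma sublists_map {A B} (f : A -> B) l :
  sublists (map f l) = map (map f) (sublists l).
Proof.
  induction l; simpl; auto. rewrite IHl, map_app, !map_map. f_equal.
Qed.

Lemma forallb_map {A B} (f : B -> bool) (h : A -> B) l :
  forallb f (map h l) = forallb (fun x => f (h x)) l.
Proof. induction l; simpl; auto. rewrite IHl; auto. Qed.

Lemma good_mapS s : good (map S s) = good s.
Proof.
  unfold good. rewrite forallb_map. apply forallb_ext_in. intros a _.
  rewrite forallb_map. apply forallb_ext_in. intros b _. unfold Pab. simpl. reflexivity.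
Qed.

Lemma G_shift k L : G (S k) L F0 = G k L F0.
Proof.
  unfold G. rewrite <- seq_shift, sublists_map, filter_length_map.
  apply filter_length_ext_in. intros s _. unfold Gp. rewrite good_mapS.
  rewrite forallb_map. reflexivity.
Qed.

Definition g (L : nat) : nat := G 0 L F0.

Lemma G_g k L : G k L F0 = g L.
Proof. induction k; auto. rewrite G_shift; auto. Qed.

Ltac evalF := unfold Fadd, F0; simpl;
  repeat first [ rewrite Nat.eqb_refl | rewrite (proj2 (Nat.eqb_neq _ _)) by lia ];
  simpl; auto.

Lemma g_rec L : g (L + 7) = g (L + 6) + g (L + 2) + g L.
Proof.
  rewrite <- !(G_g 0). replace (L + 7) with (S (L + 6)) by lia.
  rewrite G_false by reflexivity.
  replace (L + 6) with (S (L + 5)) at 2 by lia.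
  rewrite G_true by evalF.
  replace (L + 5) with (S (L + 4)) by lia.
  rewrite G_false by evalF.
  replace (L + 4) with (S (S (L + 2))) by lia.
  rewrite G_true, G_true by evalF.
  rewrite G_true by evalF. rewrite G_true by evalF.
  replace (L + 2) with (S (S L)) at 2 by lia.
  rewrite G_true by evalF. rewrite G_true by evalF.
  rewrite (G_agree _ _ (Fadd F0 0) F0).
  2:{ intros y Hy. unfold Fadd, F0. simpl.
      repeat rewrite (proj2 (Nat.eqb_neq _ _)) by lia. auto. }
  rewrite (G_agree _ _ (Fadd (Fadd F0 0) 2) F0).
  2:{ intros y Hy. unfold Fadd, F0. simpl.
      repeat rewrite (proj2 (Nat.eqb_neq _ _)) by lia. auto. }
  rewrite !G_g. lia.
Qed.

Lemma memb_false x s : (forall y, In y s -> x < y) -> memb x s = false.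
Proof.
  intros H. unfold memb. induction s; simpl; auto.
  rewrite (proj2 (Nat.eqb_neq _ _)) by (specialize (H a (or_introl eq_refl)); lia).
  simpl. apply IHs. intros y Hy; apply H; right; auto.
Qed.

Lemma forallb_const_true {A} (s : list A) : forallb (fun _ => true) s = true.
Proof. induction s; auto. Qed.

Lemma memb_forallb x s : negb (memb x s) = forallb (fun y => negb (Nat.eqb y x)) s.
Proof.
  unfold memb. induction s; simpl; auto. rewrite <- IHs.
  rewrite Nat.eqb_sym. destruct (a =? x); auto.
Qed.

Definition H4 : nat -> bool :=
  fun y => Nat.eqb y 2 || Nat.eqb y 3 || Nat.eqb y 4 || Nat.eqb y 5.

Lemma d_g j : d (j + 5) = g (j + 4) + g j.
Proof.
  unfold d. replace (j + 5) with (S (j + 4)) by lia. simpl.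
  rewrite filter_app, length_app, filter_length_map.
  rewrite <- (G_g 2 (j + 4)), <- (G_g 6 j).
  rewrite <- (G_agree 6 j H4 F0).
  2:{ intros y Hy. unfold H4, F0. repeat rewrite (proj2 (Nat.eqb_neq _ _)) by lia. auto. }
  replace (j + 4) with (S (S (S (S j)))) at 2 by lia.
  assert (E : G 2 (S (S (S (S j)))) H4 = G 6 j H4).
  { rewrite (G_true 2) by reflexivity. rewrite (G_true 3) by reflexivity.
    rewrite (G_true 4) by reflexivity. rewrite (G_true 5) by reflexivity. reflexivity. }
  rewrite <- E. replace (S (S (S (S j)))) with (j + 4) by lia.
  unfold G. f_equal; apply filter_length_ext_in; intros s Hs;
  (assert (Hlt : forall y, In y s -> 1 < y);
    [ intros y Hy; apply (sublists_incl _ _ Hs) in Hy; apply in_seq in Hy; lia | ]).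
  all: match goal with
  | |- fq_legalb (1 :: _) = _ =>
    unfold Gp; change (good (1 :: s) && negb (memb 1 (1 :: s) && memb 3 (1 :: s)) =
       good s && forallb (fun y => negb (H4 y)) s);
    rewrite good_cons by auto;
    simpl memb; simpl; rewrite memb_forallb;
    unfold H4;
    rewrite (forallb_ext_in (fun y => negb ((y =? 2) || (y =? 3) || (y =? 4) || (y =? 5)))
        (fun y => Pab 1 y && negb (y =? 3)));
    [ rewrite forallb_and;
      destruct (forallb (Pab 1) s), (good s), (forallb (fun y => negb (y =? 3)) s); auto
    | intros y _; unfold Pab; simpl; destruct (y =? 2), (y =? 3), (y =? 4), (y =? 5); auto ]
  | |- fq_legalb _ = _ =>
    unfold Gp; change (good s && negb (memb 1 s && memb 3 s) = good s && forallb (fun y => negb (F0 y)) s);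
    rewrite memb_false by auto; simpl; rewrite forallb_const_true; reflexivity
  end.
Qed.

Lemma d_small : d 7 = d 6 + d 2 + d 0 /\ d 8 = d 7 + d 3 + d 1 /\ d 9 = d 8 + d 4 + d 2
  /\ d 10 = d 9 + d 5 + d 3 /\ d 11 = d 10 + d 6 + d 4.
Proof. vm_compute. repeat split. Qed.

Lemma d_rec n : d (n + 7) = d (n + 6) + d (n + 2) + d n.
Proof.
  destruct (le_lt_dec 5 n) as [Hn|Hn].
  - replace n with ((n - 5) + 5) by lia. set (j := n - 5).
    replace (j + 5 + 7) with ((j + 7) + 5) by lia.
    replace (j + 5 + 6) with ((j + 6) + 5) by lia.
    replace (j + 5 + 2) with ((j + 2) + 5) by lia.
    rewrite !d_g. replace (j + 7 + 4) with ((j + 4) + 7) by lia.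
    replace (j + 6 + 4) with ((j + 4) + 6) by lia.
    replace (j + 2 + 4) with (j + 6) by lia.
    rewrite g_rec. rewrite (g_rec j). replace (j + 4 + 2) with (j + 6) by lia. lia.
  - destruct d_small as (A0 & A1 & A2 & A3 & A4).
    destruct n as [|[|[|[|[|n]]]]]; simpl; auto; lia.
Qed. 

From Stdlib Require Import Reals Lra Lia Psatz.
Open Scope R_scope.

Lemma Rdiv_le_0_compat (a b : R) : 0 <= a -> 0 < b -> 0 <= a / b.
Proof. intros; unfold Rdiv; apply Rmult_le_pos; auto; left; apply Rinv_0_lt_compat; auto. Qed.

Lemma sq_le_abs (x y : R) : 0 <= y -> x * x <= y * y -> Rabs x <= y.
Proof.
  intros Hy H. destruct (Rle_or_lt (Rabs x) y) as [|Hc]; auto.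
  exfalso. assert (Rabs x * Rabs x > y * y) by nra.
  rewrite <- Rabs_mult, Rabs_right in H0 by nra. lra.
Qed.

Lemma sqrt_pow_sq (m : R) (n : nat) : 0 <= m -> sqrt m ^ n * sqrt m ^ n = m ^ n.
Proof. intros Hm. rewrite <- Rpow_mult_distr, sqrt_sqrt by auto. reflexivity. Qed.

Lemma homog (s m : R) (x : nat -> R) : s * s < 4 * m ->
  (forall n, x (S (S n)) = s * x (S n) - m * x n) ->
  exists K, forall n, Rabs (x n) <= K * sqrt m ^ n.
Proof.
  intros Hsm Hrec.
  set (Q := fun n => x (S n) * x (S n) - s * x (S n) * x n + m * (x n * x n)).
  assert (HQ : forall n, Q n = Q 0%nat * m ^ n).
  { induction n. simpl; ring. unfold Q at 1. rewrite Hrec. simpl.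
    transitivity (m * Q n). unfold Q; ring. rewrite IHn; ring. }
  assert (Hm : 0 < m) by nra.
  assert (HQ0 : 0 <= Q 0%nat).
  { assert (4 * Q 0%nat = (2 * x 1%nat - s * x 0%nat) ^ 2 + (4 * m - s * s) * (x 0%nat * x 0%nat))
      by (unfold Q; ring).
    assert (0 <= (2 * x 1%nat - s * x 0%nat) ^ 2) by apply pow2_ge_0.
    assert (0 <= (x 0%nat * x 0%nat)) by apply Rle_0_sqr. nra. }
  set (c := 4 * Q 0%nat / (4 * m - s * s)).
  assert (Hc : 0 <= c). { unfold c. apply Rdiv_le_0_compat; lra. }
  exists (sqrt c). intros n.
  apply sq_le_abs. apply Rmult_le_pos. apply sqrt_pos. apply pow_le, sqrt_pos.
  replace (sqrt c * sqrt m ^ n * (sqrt c * sqrt m ^ n)) with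
     ((sqrt c * sqrt c) * (sqrt m ^ n * sqrt m ^ n)) by ring.
  rewrite sqrt_pow_sq by lra. rewrite sqrt_sqrt by auto.
  assert (Hk : 4 * Q n = (2 * x (S n) - s * x n) ^ 2 + (4 * m - s * s) * (x n * x n))
    by (unfold Q; ring).
  rewrite HQ in Hk. unfold c.
  assert (Hmn : 0 < m ^ n) by (apply pow_lt; lra).
  assert (H1 : (4 * m - s * s) * (x n * x n) <= 4 * Q 0%nat * m ^ n).
  { pose proof (pow2_ge_0 (2 * x (S n) - s * x n)). lra. }
  apply (Rmult_le_reg_l (4 * m - s * s)). lra.
  replace ((4 * m - s * s) * (4 * Q 0%nat / (4 * m - s * s) * m ^ n)) with (4 * Q 0%nat * m ^ n)
    by (field; lra). lra.
Qed.

Lemma inhomog (s m sg K : R) (x f : nat -> R) : s * s < 4 * m -> m < sg * sg -> 0 < sg ->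
  (forall n, Rabs (f n) <= K * sg ^ n) ->
  (forall n, x (S (S n)) = s * x (S n) - m * x n + f n) ->
  exists K', forall n, Rabs (x n) <= K' * sg ^ n.
Proof.
  intros Hsm Hms Hsg Hf Hrec.
  assert (Hm : 0 < m) by nra.
  set (Q := fun n => x (S n) * x (S n) - s * x (S n) * x n + m * (x n * x n)).
  assert (HQpos : forall n, 4 * Q n >= (4 * m - s * s) * (x n * x n)).
  { intros n. assert (4 * Q n = (2 * x (S n) - s * x n) ^ 2 + (4 * m - s * s) * (x n * x n))
      by (unfold Q; ring).
    assert (0 <= (2 * x (S n) - s * x n) ^ 2) by apply pow2_ge_0. lra. }
  set (eta := (sg * sg - m) / (2 * m)).
  assert (Heta : 0 < eta). { unfold eta. apply Rdiv_lt_0_compat; lra. }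
  set (lam := (1 + eta) * m).
  assert (Hlam : lam < sg * sg). { unfold lam, eta. field_simplify; lra. }
  assert (Hlam0 : 0 < lam). { unfold lam. nra. }
  set (c := 1 + / eta).
  assert (Hc : 0 < c). { unfold c. assert (0 < / eta) by (apply Rinv_0_lt_compat; lra). lra. }
  assert (Hstep : forall n, Q (S n) <= lam * Q n + c * (f n * f n)).
  { intros n. unfold Q at 1. rewrite Hrec.
    set (x1 := x (S n)). set (x0 := x n). set (fn := f n).
    set (h := s * x1 - m * x0).
    assert (Hid : (h + fn) * (h + fn) - s * (h + fn) * x1 + m * (x1 * x1)
              = m * Q n + fn * (2 * h - s * x1) + fn * fn) by (unfold Q, h; fold x1 x0; ring).
    rewrite Hid.
    set (y := 2 * h - s * x1).
    assert (Hy : y * y <= 4 * m * Q n).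
    { assert (Hid2 : 4 * m * Q n = y * y + (4 * m - s * s) * (x1 * x1))
        by (unfold y, h, Q; fold x1 x0; ring). nra. }
    assert (Hfy : eta * (fn * y) <= eta * eta * (y * y) / 4 + fn * fn).
    { assert (0 <= (eta * y / 2 - fn) ^ 2) by apply pow2_ge_0. nra. }
    assert (Hfy2 : fn * y <= eta * (y * y) / 4 + fn * fn / eta).
    { apply (Rmult_le_reg_l eta); auto.
      replace (eta * (eta * (y * y) / 4 + fn * fn / eta)) with (eta * eta * (y * y) / 4 + fn * fn)
        by (field; lra). lra. }
    unfold lam, c. 
    assert (Hq : eta * (y * y) / 4 <= eta * m * Q n).
    { assert (eta * (y * y) <= eta * (4 * m * Q n)) by (apply Rmult_le_compat_l; lra). lra. }
    assert (fn * fn / eta = / eta * (fn * fn)) by (unfold Rdiv; ring).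
    nra. }
  assert (HK : 0 <= K).
  { specialize (Hf 0%nat). simpl in Hf. pose proof (Rabs_pos (f 0%nat)). lra. }
  assert (HQ0 : 0 <= Q 0%nat). { specialize (HQpos 0%nat). nra. }
  set (D := Q 0%nat + c * K * K / (sg * sg - lam)).
  assert (HD : forall n, Q n <= D * (sg * sg) ^ n).
  { induction n.
    - simpl. unfold D. assert (0 <= c * K * K / (sg * sg - lam)).
      { apply Rdiv_le_0_compat. apply Rmult_le_pos; [nra|lra]. lra. } lra.
    - eapply Rle_trans. apply Hstep.
      assert (Hfn : f n * f n <= K * K * (sg * sg) ^ n).
      { specialize (Hf n). rewrite Rpow_mult_distr.
        assert (Hp : 0 <= sg ^ n) by (apply pow_le; lra).
        replace (f n * f n) with (Rabs (f n) * Rabs (f n))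
          by (rewrite <- Rabs_mult; apply Rabs_right; nra).
        assert (0 <= Rabs (f n)) by apply Rabs_pos. nra. }
      assert (Hpn : 0 < (sg * sg) ^ n) by (apply pow_lt; nra).
      simpl. 
      assert (Hkey : lam * D + c * K * K <= D * (sg * sg)).
      { assert (HDe : D * (sg * sg - lam) = Q 0%nat * (sg * sg - lam) + c * K * K)
          by (unfold D; field; lra).
        assert (0 <= Q 0%nat * (sg * sg - lam)) by (apply Rmult_le_pos; lra).
        lra. }
      assert (lam * Q n <= lam * (D * (sg * sg) ^ n)) by (apply Rmult_le_compat_l; lra).
      assert (c * (f n * f n) <= c * (K * K * (sg * sg) ^ n)) by (apply Rmult_le_compat_l; lra).
      nra. }
  assert (HDpos : 0 <= D). { specialize (HD 0%nat). simpl in HD. lra. }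
  set (c2 := 4 * D / (4 * m - s * s)).
  assert (Hc2 : 0 <= c2). { unfold c2. apply Rdiv_le_0_compat; lra. }
  exists (sqrt c2). intros n.
  apply sq_le_abs. apply Rmult_le_pos. apply sqrt_pos. apply pow_le; lra.
  replace (sqrt c2 * sg ^ n * (sqrt c2 * sg ^ n)) with
     ((sqrt c2 * sqrt c2) * (sg * sg) ^ n) by (rewrite Rpow_mult_distr; ring).
  rewrite sqrt_sqrt by auto.
  specialize (HQpos n). specialize (HD n).
  assert (Hmn : 0 < (sg * sg) ^ n) by (apply pow_lt; nra).
  unfold c2. apply (Rmult_le_reg_l (4 * m - s * s)). lra.
  replace ((4 * m - s * s) * (4 * D / (4 * m - s * s) * (sg * sg) ^ n)) with (4 * (D * (sg * sg) ^ n))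
    by (field; lra). lra.
Qed.

Lemma vander6 (d0 d1 d2 d3 d4 d5 : R) :
  (forall x : R, x = -1 \/ x = -2 \/ x = -3 \/ x = -4 \/ x = -5 \/ x = -6 ->
     d5 * x ^ 5 + d4 * x ^ 4 + d3 * x ^ 3 + d2 * x ^ 2 + d1 * x + d0 = 0) ->
  d0 = 0 /\ d1 = 0 /\ d2 = 0 /\ d3 = 0 /\ d4 = 0 /\ d5 = 0.
Proof.
  intros H.
  pose proof (H (-1) ltac:(tauto)) as E1.
  pose proof (H (-2) ltac:(tauto)) as E2.
  pose proof (H (-3) ltac:(tauto)) as E3.
  pose proof (H (-4) ltac:(tauto)) as E4.
  pose proof (H (-5) ltac:(tauto)) as E5.
  pose proof (H (-6) ltac:(tauto)) as E6.
  simpl in *. repeat split; lra.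
Qed.

Lemma assembly (u : nat -> R) (r s1 m1 s2 m2 s3 m3 : R) :
  (forall n, u (n + 7)%nat = u (n + 6)%nat + u (n + 2)%nat + u n) ->
  r ^ 7 - r ^ 6 - r ^ 2 - 1 = 0 -> 139 / 100 <= r ->
  (forall x, x ^ 7 - x ^ 6 - x ^ 2 - 1 =
     (x - r) * (x ^ 2 - s1 * x + m1) * (x ^ 2 - s2 * x + m2) * (x ^ 2 - s3 * x + m3)) ->
  s1 * s1 < 4 * m1 -> s2 * s2 < 4 * m2 -> s3 * s3 < 4 * m3 -> m2 < m1 -> m3 < m1 ->
  (forall k, 0 <= u k) -> 0 < u 6%nat ->
  exists beta, 0 < beta /\ exists K, forall n, Rabs (u n - beta * r ^ n) <= K * sqrt m1 ^ n.
Proof.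
  intros Hrec Hr Hr1 Hfac H1 H2 H3 H21 H31 Hu0 Hu6.
  set (b5 := r - 1). set (b4 := r * b5). set (b3 := r * b4). set (b2 := r * b3).
  set (b1 := r * b2 - 1). set (b0 := r * b1).
  assert (Hr0 : 0 < r) by lra.
  assert (Hb5 : 0 < b5) by (unfold b5; lra).
  assert (Hb4 : 0 < b4) by (unfold b4; nra).
  assert (Hb3 : 0 < b3) by (unfold b3; nra).
  assert (Hb2 : 0 < b2) by (unfold b2; nra).
  assert (Hb1 : 0 < b1).
  { unfold b1, b2, b3, b4, b5.
    assert (r * r >= 139/100 * (139/100)) by nra.
    assert (r * r * (r * r) >= 139/100 * (139/100) * (139/100 * (139/100))) by nra.
    nra. }
  assert (Hb0 : 0 < b0) by (unfold b0; nra).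
  set (w := fun n => u (n + 6)%nat + b5 * u (n + 5)%nat + b4 * u (n + 4)%nat + b3 * u (n + 3)%nat
                     + b2 * u (n + 2)%nat + b1 * u (n + 1)%nat + b0 * u n).
  assert (Hw : forall n, w (S n) = r * w n).
  { intros n.
    assert (E : w (S n) - r * w n = (u (n + 7)%nat - u (n + 6)%nat - u (n + 2)%nat - u n)
               - u n * (r ^ 7 - r ^ 6 - r ^ 2 - 1)).
    { unfold w, b0, b1, b2, b3, b4, b5.
      replace (S n + 6)%nat with (n + 7)%nat by lia.
      replace (S n + 5)%nat with (n + 6)%nat by lia.
      replace (S n + 4)%nat with (n + 5)%nat by lia.
      replace (S n + 3)%nat with (n + 4)%nat by lia.
      replace (S n + 2)%nat with (n + 3)%nat by lia.
      replace (S n + 1)%nat with (n + 2)%nat by lia.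
      replace (S n) with (n + 1)%nat at 1 by lia. ring. }
    rewrite Hrec, Hr in E. lra. }
  assert (Hwn : forall n, w n = w 0%nat * r ^ n).
  { induction n. simpl; ring. rewrite Hw, IHn. simpl; ring. }
  set (Sv := r ^ 6 + b5 * r ^ 5 + b4 * r ^ 4 + b3 * r ^ 3 + b2 * r ^ 2 + b1 * r + b0).
  assert (HSv : 0 < Sv).
  { unfold Sv. assert (0 < r ^ 6) by (apply pow_lt; lra).
    assert (0 < r ^ 5) by (apply pow_lt; lra). assert (0 < r ^ 4) by (apply pow_lt; lra).
    assert (0 < r ^ 3) by (apply pow_lt; lra). assert (0 < r ^ 2) by (apply pow_lt; lra).
    nra. }
  assert (Hw0 : 0 < w 0%nat).
  { unfold w. simpl.
    pose proof (Hu0 5%nat). pose proof (Hu0 4%nat). pose proof (Hu0 3%nat).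
    pose proof (Hu0 2%nat). pose proof (Hu0 1%nat). pose proof (Hu0 0%nat). nra. }
  set (beta := w 0%nat / Sv).
  exists beta. split. { unfold beta. apply Rdiv_lt_0_compat; lra. }
  set (e := fun n => u n - beta * r ^ n).
  assert (He : forall n, e (n + 6)%nat + b5 * e (n + 5)%nat + b4 * e (n + 4)%nat + b3 * e (n + 3)%nat
                     + b2 * e (n + 2)%nat + b1 * e (n + 1)%nat + b0 * e n = 0).
  { intros n. unfold e.
    transitivity (w n - beta * r ^ n * Sv).
    { unfold w, Sv. rewrite !pow_add. ring. }
    rewrite Hwn. unfold beta. field. lra. }
  (* coefficients of q2 q3 *)
  set (t3 := - (s2 + s3)). set (t2 := m2 + m3 + s2 * s3). set (t1 := - (s2 * m3 + s3 * m2)).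
  set (t0 := m2 * m3).
  set (c5 := t3 - s1). set (c4 := t2 - s1 * t3 + m1). set (c3 := t1 - s1 * t2 + m1 * t3).
  set (c2 := t0 - s1 * t1 + m1 * t2). set (c1 := - s1 * t0 + m1 * t1). set (c0 := m1 * t0).
  assert (Hcoef : b0 - c0 = 0 /\ b1 - c1 = 0 /\ b2 - c2 = 0 /\ b3 - c3 = 0 /\ b4 - c4 = 0 /\ b5 - c5 = 0).
  { apply vander6. intros x Hx.
    assert (Hxr : x - r <> 0) by (destruct Hx as [ -> | [ -> | [ -> | [ -> | [ -> | -> ] ] ] ] ]; lra).
    apply (Rmult_eq_reg_l (x - r)); auto. rewrite Rmult_0_r.
    pose proof (Hfac x) as Hx2.
    transitivity ((x ^ 7 - x ^ 6 - x ^ 2 - 1) - (r ^ 7 - r ^ 6 - r ^ 2 - 1) -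
      (x - r) * (x ^ 2 - s1 * x + m1) * (x ^ 2 - s2 * x + m2) * (x ^ 2 - s3 * x + m3)).
    { unfold b0, b1, b2, b3, b4, b5, c0, c1, c2, c3, c4, c5, t0, t1, t2, t3. ring. }
    rewrite Hr, Hx2. ring. }
  destruct Hcoef as (C0 & C1 & C2 & C3 & C4 & C5).
  set (f := fun n => e (n + 4)%nat + t3 * e (n + 3)%nat + t2 * e (n + 2)%nat + t1 * e (n + 1)%nat + t0 * e n).
  assert (Hf : forall n, f (S (S n)) = s1 * f (S n) - m1 * f n).
  { intros n. 
    assert (E : f (S (S n)) - s1 * f (S n) + m1 * f n =
       e (n + 6)%nat + b5 * e (n + 5)%nat + b4 * e (n + 4)%nat + b3 * e (n + 3)%nat
                     + b2 * e (n + 2)%nat + b1 * e (n + 1)%nat + b0 * e n).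
    { replace b5 with c5 by lra. replace b4 with c4 by lra. replace b3 with c3 by lra.
      replace b2 with c2 by lra. replace b1 with c1 by lra. replace b0 with c0 by lra.
      unfold f. unfold c0, c1, c2, c3, c4, c5.
      replace (S (S n) + 4)%nat with (n + 6)%nat by lia.
      replace (S (S n) + 3)%nat with (n + 5)%nat by lia.
      replace (S (S n) + 2)%nat with (n + 4)%nat by lia.
      replace (S (S n) + 1)%nat with (n + 3)%nat by lia.
      replace (S n + 4)%nat with (n + 5)%nat by lia.
      replace (S n + 3)%nat with (n + 4)%nat by lia.
      replace (S n + 2)%nat with (n + 3)%nat by lia.
      replace (S n + 1)%nat with (n + 2)%nat by lia.
      replace (S (S n)) with (n + 2)%nat by lia.
      replace (S n) with (n + 1)%nat by lia. ring. }
    rewrite He in E. lra. }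
  destruct (homog s1 m1 f H1 Hf) as [K1 HK1].
  assert (Hm1 : 0 < m1) by nra.
  set (sg := sqrt m1).
  assert (Hsg : 0 < sg) by (apply sqrt_lt_R0; lra).
  assert (Hsg2 : sg * sg = m1) by (apply sqrt_sqrt; lra).
  set (gg := fun n => e (n + 2)%nat - s3 * e (n + 1)%nat + m3 * e n).
  assert (Hg : forall n, gg (S (S n)) = s2 * gg (S n) - m2 * gg n + f n).
  { intros n. unfold gg, f, t0, t1, t2, t3.
    replace (S (S n) + 2)%nat with (n + 4)%nat by lia.
    replace (S (S n) + 1)%nat with (n + 3)%nat by lia.
    replace (S n + 2)%nat with (n + 3)%nat by lia.
    replace (S n + 1)%nat with (n + 2)%nat by lia.
    replace (S (S n)) with (n + 2)%nat by lia.
    replace (S n) with (n + 1)%nat by lia. ring. }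
  destruct (inhomog s2 m2 sg K1 gg f H2 ltac:(lra) Hsg HK1 Hg) as [K2 HK2].
  assert (He2 : forall n, e (S (S n)) = s3 * e (S n) - m3 * e n + gg n).
  { intros n. unfold gg.
    replace (S (S n)) with (n + 2)%nat by lia.
    replace (S n) with (n + 1)%nat by lia. ring. }
  destruct (inhomog s3 m3 sg K2 e gg H3 ltac:(lra) Hsg HK2 He2) as [K3 HK3].
  exists K3. exact HK3.
Qed.

From Stdlib Require Import Reals Lra.
Open Scope R_scope.

Lemma cont_FQ : continuity FQpolyR.
Proof.
  unfold FQpolyR. intros x. reg.
Qed.

Lemma r1_lower (r1 : R) : (forall x : R, FQpolyR x = 0 -> x <= r1) -> 139 / 100 <= r1.
Proof.
  intros H.
  destruct (IVT FQpolyR (139/100) (14/10) cont_FQ) as [x [[Hx1 Hx2] Hx]].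
  lra. unfold FQpolyR; lra. unfold FQpolyR; lra.
  specialize (H x Hx). lra.
Qed.

From Stdlib Require Import Reals Lra Lia ZArith.
Open Scope R_scope.

Definition zmul (z w : Z * Z) : Z * Z :=
  ((fst z * fst w - snd z * snd w)%Z, (fst z * snd w + snd z * fst w)%Z).
Fixpoint zpow (z : Z * Z) (n : nat) : Z * Z :=
  match n with O => (1%Z, 0%Z) | S k => zmul z (zpow z k) end.

Lemma Cpow_Z (A B D : Z) (n : nat) : IZR D <> 0 ->
  Cpow (IZR A / IZR D, IZR B / IZR D) n =
  (IZR (fst (zpow (A, B) n)) / IZR D ^ n, IZR (snd (zpow (A, B) n)) / IZR D ^ n).
Proof.
  intros HD. induction n.
  - simpl. f_equal; field.
  - simpl Cpow. rewrite IHn. unfold Cmul. simpl fst. simpl snd.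
    unfold zmul. simpl fst; simpl snd.
    rewrite !minus_IZR, !plus_IZR, !mult_IZR. simpl pow.
    f_equal; field; split; auto; apply pow_nonzero; auto.
Qed.

Definition zP (A B D : Z) : Z * Z :=
  let z7 := zpow (A, B) 7 in let z6 := zpow (A, B) 6 in let z2 := zpow (A, B) 2 in
  ((fst z7 - D * fst z6 - D ^ 5 * fst z2 - D ^ 7)%Z, (snd z7 - D * snd z6 - D ^ 5 * snd z2)%Z).

Lemma FQ_Z (A B D : Z) : IZR D <> 0 ->
  FQpolyC (IZR A / IZR D, IZR B / IZR D) =
  (IZR (fst (zP A B D)) / IZR D ^ 7, IZR (snd (zP A B D)) / IZR D ^ 7).
Proof.
  intros HD. unfold FQpolyC. rewrite !Cpow_Z by auto. unfold zP. cbv zeta.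
  generalize (zpow (A, B) 7) (zpow (A, B) 6) (zpow (A, B) 2). intros [x7 y7] [x6 y6] [x2 y2].
  cbn [fst snd].
  rewrite !minus_IZR, !mult_IZR.
  change (D ^ 5)%Z with (D ^ Z.of_nat 5)%Z. change (D ^ 7)%Z with (D ^ Z.of_nat 7)%Z.
  rewrite <- !pow_IZR.
  f_equal; field; repeat split; auto; apply pow_nonzero; auto.
Qed.

Lemma FQ_small (A B D : Z) : (0 < D)%Z ->
  Z.ltb ((fst (zP A B D) * fst (zP A B D) + snd (zP A B D) * snd (zP A B D)) * 10 ^ 28) (D ^ 14) = true ->
  let p := FQpolyC (IZR A / IZR D, IZR B / IZR D) in
  fst p * fst p + snd p * snd p < / 10 ^ 28.
Proof.
  intros HD H. apply Z.ltb_lt in H. assert (HDr : 0 < IZR D) by (apply IZR_lt; lia).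
  cbv zeta. rewrite FQ_Z by lra. cbn [fst snd].
  generalize (fst (zP A B D)) (snd (zP A B D)) H. intros X Y HXY.
  apply IZR_lt in HXY. rewrite mult_IZR, plus_IZR, !mult_IZR in HXY.
  change (10 ^ 28)%Z with (10 ^ Z.of_nat 28)%Z in HXY.
  change (D ^ 14)%Z with (D ^ Z.of_nat 14)%Z in HXY.
  rewrite <- !pow_IZR in HXY.
  assert (H7 : 0 < IZR D ^ 7) by (apply pow_lt; lra).
  assert (H10 : 0 < 10 ^ 28) by (apply pow_lt; lra).
  replace (IZR X / IZR D ^ 7 * (IZR X / IZR D ^ 7) + IZR Y / IZR D ^ 7 * (IZR Y / IZR D ^ 7))
    with ((IZR X * IZR X + IZR Y * IZR Y) / (IZR D ^ 7 * IZR D ^ 7)) by (field; lra).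
  replace (IZR D ^ 14) with (IZR D ^ 7 * IZR D ^ 7) in HXY by ring.
  apply (Rmult_lt_reg_r (IZR D ^ 7 * IZR D ^ 7 * 10 ^ 28)). nra.
  replace ((IZR X * IZR X + IZR Y * IZR Y) / (IZR D ^ 7 * IZR D ^ 7) * (IZR D ^ 7 * IZR D ^ 7 * 10 ^ 28))
    with ((IZR X * IZR X + IZR Y * IZR Y) * 10 ^ 28) by (field; lra).
  replace (/ 10 ^ 28 * (IZR D ^ 7 * IZR D ^ 7 * 10 ^ 28)) with (IZR D ^ 7 * IZR D ^ 7) by (field; lra).
  lra.
Qed.

Definition ca1 : R := IZR 6790213438326961 / IZR 10000000000000000.
Definition cb1 : R := IZR 8318199878033884 / IZR 10000000000000000.
Definition ca2 : R := IZR (-8226996926659100) / IZR 10000000000000000.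
Definition cb2 : R := IZR 5262533464376888 / IZR 10000000000000000.
Definition ca3 : R := IZR (-548392888400819) / IZR 10000000000000000.
Definition cb3 : R := IZR 8049216240285119 / IZR 10000000000000000.

Lemma root1_approx : let p := FQpolyC (ca1, cb1) in fst p * fst p + snd p * snd p < / 10 ^ 28.
Proof. apply FQ_small. lia. vm_compute. reflexivity. Qed.
Lemma root2_approx : let p := FQpolyC (ca2, cb2) in fst p * fst p + snd p * snd p < / 10 ^ 28.
Proof. apply FQ_small. lia. vm_compute. reflexivity. Qed.
Lemma root3_approx : let p := FQpolyC (ca3, cb3) in fst p * fst p + snd p * snd p < / 10 ^ 28.
Proof. apply FQ_small. lia. vm_compute. reflexivity. Qed.

Definition qf (a b x : R) : R := (x - a) ^ 2 + b ^ 2.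
Definition near (c v : R) : Prop := c - 1/100 <= v <= c + 1/100.

From Stdlib Require Import Reals List Arith Lra Classical.
From mathcomp Require ssreflect.
From mathcomp Require all_boot all_order all_algebra.
From mathcomp Require Rstruct complex.
Module MC.
Import ssreflect ssrfun ssrbool eqtype ssrnat seq bigop order ssralg ssrnum poly.
Import GRing.Theory Num.Theory.
Import Rstruct complex.
Local Open Scope ring_scope.
Local Open Scope complex_scope.

Definition PC : {poly R[i]} := 'X^7 - 'X^6 - 'X^2 - 1.

Definition n2 (z : R[i]) : R := Re z * Re z + Im z * Im z.

Lemma Re_mul (z w : R[i]) : Re (z * w) = Re z * Re w - Im z * Im w.
Proof. by case: z => a b; case: w => c d. Qed.
Lemma Im_mul (z w : R[i]) : Im (z * w) = Re z * Im w + Im z * Re w.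
Proof. by case: z => a b; case: w => c d. Qed.

Lemma Cpow_bridge (z : R[i]) (n : nat) : Cpow (Re z, Im z) n = (Re (z ^+ n), Im (z ^+ n)).
Proof.
  elim: n => [|n IH]; first by rewrite expr0.
  rewrite exprS /= IH /Cmul /= Re_mul Im_mul. done.
Qed.

Lemma PC_horner (z : R[i]) : PC.[z] = z ^+ 7 - z ^+ 6 - z ^+ 2 - 1.
Proof. by rewrite /PC !hornerE. Qed.

Lemma bridge (z : R[i]) : PC.[z] = Complex (fst (FQpolyC (Re z, Im z))) (snd (FQpolyC (Re z, Im z))).
Proof.
  rewrite PC_horner /FQpolyC !Cpow_bridge /=.
  move: (z ^+ 7) (z ^+ 6) (z ^+ 2) => [a7 b7] [a6 b6] [a2 b2] /=.
  apply/eqP; rewrite eq_complex /= subr0; apply/andP; split; apply/eqP; reflexivity.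
Qed.


Lemma PC_eq : PC = 'X^7 + - ('X^6 + 'X^2 + 1).
Proof. by rewrite /PC !opprD !addrA. Qed.

Lemma size_PC : size PC = 8%N.
Proof.
  rewrite PC_eq size_addl ?size_polyXn // size_opp.
  apply: (leq_ltn_trans (size_add _ _)). rewrite gtn_max.
  apply/andP; split; last by rewrite size_poly1.
  apply: (leq_ltn_trans (size_add _ _)). by rewrite !size_polyXn.
Qed.

Lemma lead_PC : lead_coef PC = 1.
Proof.
  rewrite PC_eq lead_coefDl ?lead_coefXn // size_polyXn size_opp.
  apply: (leq_ltn_trans (size_add _ _)). rewrite gtn_max.
  apply/andP; split; last by rewrite size_poly1.
  apply: (leq_ltn_trans (size_add _ _)). by rewrite !size_polyXn.
Qed.

Lemma PC_split : exists rs : seq R[i], PC = \prod_(z <- rs) ('X - z%:P) /\ size rs = 7%N.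
Proof.
  have [rs Hrs] := closed_field_poly_normal PC.
  rewrite lead_PC scale1r in Hrs. exists rs; split => //.
  have := size_PC. rewrite Hrs size_prod_XsubC. by case.
Qed.

Lemma n2M (z w : R[i]) : n2 (z * w) = n2 z * n2 w.
Proof.
  rewrite /n2 Re_mul Im_mul. rewrite !RealsE.
  case: z => a b; case: w => c d /=. rewrite -!RealsE. ring.
Qed.
Lemma n2_prod (s : seq R[i]) (F : R[i] -> R[i]) :
  n2 (\prod_(z <- s) F z) = \prod_(z <- s) n2 (F z).
Proof.
  elim: s => [|a s IH]; first by rewrite !big_nil /n2 /= -!RealsE; ring.
  by rewrite !big_cons n2M IH.
Qed.

Lemma prod_ge (s : seq R[i]) (F : R[i] -> R) (d2 : R) : Rle 0 d2 ->
  (forall z, z \in s -> Rle d2 (F z)) -> Rle (pow d2 (size s)) (\prod_(z <- s) F z).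
Proof.
  move=> Hd. elim: s => [|a s IH] H; first by rewrite big_nil /=; apply: Rle_refl.
  rewrite big_cons /=. rewrite -RmultE.
  apply: Rmult_le_compat => //. apply: pow_le => //.
  apply: H; by rewrite in_cons eqxx.
  apply: IH => z Hz; apply: H; by rewrite in_cons Hz orbT.
Qed.

Lemma loc (rs : seq R[i]) (x : R[i]) (d2 : R) :
  PC = \prod_(z <- rs) ('X - z%:P) -> size rs = 7%N -> Rle 0 d2 ->
  Rlt (n2 (PC.[x])) (pow d2 7) -> exists z, z \in rs /\ Rle (n2 (x - z)) d2.
Proof.
  move=> Hrs Hsz Hd Hlt.
  apply: NNPP => Hno.
  have Hall : forall z, z \in rs -> Rle d2 (n2 (x - z)).
  { move=> z Hz. apply: Rnot_lt_le => Hc. apply: Hno. exists z; split => //. lra. }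
  have Hprod : n2 PC.[x] = \prod_(z <- rs) n2 (x - z).
  { rewrite Hrs horner_prod. under eq_bigr do rewrite hornerXsubC. by rewrite n2_prod. }
  have := prod_ge rs (fun z => n2 (x - z)) d2 Hd Hall.
  rewrite Hsz -Hprod. lra.
Qed.
Lemma root_of (rs : seq R[i]) (z : R[i]) : PC = \prod_(w <- rs) ('X - w%:P) -> z \in rs ->
  FQpolyC (Re z, Im z) = (R0, R0).
Proof.
  move=> Hrs Hz. have : root PC z by rewrite Hrs root_prod_XsubC.
  move/rootP; rewrite bridge. case: (FQpolyC (Re z, Im z)) => [u v] /= H.
  by case: H => -> ->.
Qed.

Lemma in_of_root (rs : seq R[i]) (a b : R) : PC = \prod_(w <- rs) ('X - w%:P) ->
  FQpolyC (a, b) = (R0, R0) -> Complex a b \in rs.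
Proof.
  move=> Hrs H. rewrite -root_prod_XsubC -Hrs. apply/rootP. rewrite bridge.
  have -> : (Re (Complex a b), Im (Complex a b)) = (a, b) by [].
  by rewrite H.
Qed.

Lemma FQ_conj (a b : R) : FQpolyC (a, Ropp b) = (fst (FQpolyC (a, b)), Ropp (snd (FQpolyC (a, b)))).
Proof. rewrite /FQpolyC /Cmul /=. f_equal; ring. Qed.

Lemma FQ_real (x : R) : fst (FQpolyC (x, R0)) = FQpolyR x.
Proof. rewrite /FQpolyC /FQpolyR /Cmul /=. ring. Qed.

Lemma located (rs : seq R[i]) (A B : R) : PC = \prod_(w <- rs) ('X - w%:P) -> size rs = 7%N ->
  Rlt (let p := FQpolyC (A, B) in Rplus (Rmult (fst p) (fst p)) (Rmult (snd p) (snd p))) (Rinv (pow 10 28)) ->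
  exists z : R[i], z \in rs /\ near A (@Re R z) /\ near B (@Im R z).
Proof.
  move=> Hrs Hsz Hp.
  have Hd : Rle 0 (Rdiv 1 10000) by lra.
  have Hn : Rlt (n2 PC.[Complex A B]) (pow (Rdiv 1 10000) 7).
  { rewrite bridge.
    have -> : (Re (Complex A B), Im (Complex A B)) = (A, B) by [].
    move: Hp. case: (FQpolyC (A, B)) => u v Hp. cbv zeta in Hp. cbn [fst snd] in Hp.
    rewrite /n2; cbn [Re Im].
    replace (pow (Rdiv 1 10000) 7) with (Rinv (pow 10 28)); first by exact Hp.
    field. }
  have [z [Hz Hz2]] := loc rs (Complex A B) (Rdiv 1 10000) Hrs Hsz Hd Hn.
  exists z; split => //. move: Hz2. rewrite /n2 /=. case: z {Hz} => a b /= H. rewrite -?RealsE in H.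
  have H1 : Rle (Rmult (A - a) (A - a)) (1 / 10000) by (pose proof (Rle_0_sqr (Rminus B b)); unfold Rsqr in *; unfold Rminus in *; lra).
  have H2 : Rle (Rmult (B - b) (B - b)) (1 / 10000) by (pose proof (Rle_0_sqr (Rminus A a)); unfold Rsqr in *; unfold Rminus in *; lra).
  rewrite /near. repeat split; nra.
Qed.
Lemma Re_conj (z : R[i]) : Re (z^*)%C = Re z. Proof. by case: z. Qed.
Lemma Im_conj (z : R[i]) : Im (z^*)%C = - Im z. Proof. by case: z. Qed.

Lemma neq_Re (z w : R[i]) : ~ (@eq R (Re z) (Re w)) -> z != w.
Proof. move=> H; apply/eqP => E; apply: H; by rewrite E. Qed.
Lemma neq_Im (z w : R[i]) : ~ (@eq R (Im z) (Im w)) -> z != w.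
Proof. move=> H; apply/eqP => E; apply: H; by rewrite E. Qed.

Lemma pairC (x : R) (w : R[i]) : (x%:C - w) * (x%:C - (w^*)%C) = (qf (Re w) (Im w) x)%:C.
Proof.
  case: w => a b. apply/eqP; rewrite eq_complex /=. apply/andP; split; apply/eqP;
  rewrite /qf -?RealsE; simpl; ring.
Qed.

Lemma pairCt (x : R) (w t : R[i]) : (x%:C - w) * ((x%:C - (w^*)%C) * t) = (qf (Re w) (Im w) x)%:C * t.
Proof. by rewrite mulrA pairC. Qed.

Lemma Re_Cmul (c : R) (t : R[i]) : Re (c%:C * t) = Rmult c (Re t).
Proof. case: t => a b /=. rewrite -?RealsE. ring. Qed.

Lemma zeroE : (0 : R) = R0. Proof. by []. Qed.
Lemma oneE : (1 : R) = R1. Proof. by []. Qed.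

Lemma ImC (x : R) : Im (x%:C) = R0. Proof. by []. Qed.
Lemma ReC (x : R) : Re (x%:C) = x. Proof. by []. Qed.

Ltac solve_ne :=
  first [ apply: neq_Im; rewrite ?Re_conj ?Im_conj ?ImC ?ReC /= -?RealsE ?zeroE; let H := fresh in move=> H; lra
        | apply: neq_Re; rewrite ?Re_conj ?Im_conj ?ImC ?ReC /= -?RealsE ?zeroE; let H := fresh in move=> H; lra ].

Lemma factorization (r : R) : FQpolyR r = R0 ->
  exists a1 b1 a2 b2 a3 b3 : R,
    FQpolyC (a1, b1) = (R0, R0) /\ near ca1 a1 /\ near cb1 b1 /\
    near ca2 a2 /\ near cb2 b2 /\ near ca3 a3 /\ near cb3 b3 /\
    forall x : R, FQpolyR x = Rmult (Rminus x r) (Rmult (qf a1 b1 x) (Rmult (qf a2 b2 x) (qf a3 b3 x))).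
Proof.
  move=> Hr.
  have [rs [Hrs Hsz]] := PC_split.
  have [w1 [Hw1 [N1 N1']]] := located rs ca1 cb1 Hrs Hsz root1_approx.
  have [w2 [Hw2 [N2 N2']]] := located rs ca2 cb2 Hrs Hsz root2_approx.
  have [w3 [Hw3 [N3 N3']]] := located rs ca3 cb3 Hrs Hsz root3_approx.
  have N1c := N1; have N1c' := N1'; have N2c := N2; have N2c' := N2'; have N3c := N3; have N3c' := N3'.
  rewrite /near /ca1 /cb1 /ca2 /cb2 /ca3 /cb3 in N1c N1c' N2c N2c' N3c N3c'.
  move: N1c N1c' N2c N2c' N3c N3c' => [L1 U1] [L1' U1'] [L2 U2] [L2' U2'] [L3 U3] [L3' U3'].
  set L := [:: r%:C; w1; (w1^*)%C; w2; (w2^*)%C; w3; (w3^*)%C].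
  have HrC : r%:C \in rs.
  { apply: in_of_root => //. rewrite /FQpolyC /FQpolyR /Cmul /= in Hr *. f_equal; rewrite -?RealsE. lra. ring. }
  have Hconj : forall w, w \in rs -> (w^*)%C \in rs.
  { move=> w Hw. have := root_of rs w Hrs Hw. case: w {Hw} => a b /= H.
    apply: in_of_root => //. rewrite FQ_conj H /=. f_equal. rewrite -?RealsE. ring. }
  have Hsub : {subset L <= rs}.
  { move=> z; rewrite !inE => /or3P [/eqP->|/eqP->|/or3P [/eqP->|/eqP->|/or3P [/eqP->|/eqP->|/eqP->]]] //;
    by apply: Hconj. }
  have uL : uniq L.
  { rewrite /L /= !inE !negb_or. repeat (apply/andP; split); try done. all: solve_ne. }
  have Hle : (size rs <= size L)%N by rewrite Hsz.
  have [Hsize Heq] := uniq_min_size uL Hsub Hle.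
  have urs : uniq rs by rewrite (uniq_size_uniq uL Heq) Hsize.
  have Hperm : perm_eq L rs := uniq_perm uL urs Heq.
  have HPL : PC = \prod_(z <- L) ('X - z%:P) by rewrite Hrs (perm_big _ Hperm).
  exists (Re w1), (Im w1), (Re w2), (Im w2), (Re w3), (Im w3).
  split; first by have := root_of rs w1 Hrs Hw1.
  do 6 (split; first done).
  move=> x.
  have HPx : PC.[x%:C] = \prod_(z <- L) (x%:C - z).
  { rewrite {1}HPL horner_prod. apply: eq_bigr => z _. by rewrite hornerXsubC. }
  rewrite /L !big_cons big_nil mulr1 (pairCt x w1) (pairCt x w2) (pairC x w3) in HPx.
  have E1 : @Re R PC.[x%:C] = FQpolyR x by rewrite bridge ReC ImC; exact: FQ_real.
  rewrite -E1 HPx -rmorphB !Re_Cmul ReC. by [].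
Qed.
End MC.
Open Scope R_scope.

Theorem mainTheorem11 (r1 r2 : R)
  (Hr1root : FQpolyR r1 = 0)
  (Hr1max : forall x : R, FQpolyR x = 0 -> x <= r1)
  (Hr2ex : exists z : R * R, is_FQroot z /\ snd z <> 0 /\ Cmod z = r2)
  (Hr2max : forall z : R * R, is_FQroot z -> z <> (r1, 0) -> Cmod z <= r2) :
  exists beta1 : R, 0 < beta1 /\
    exists (C : R) (N : nat), forall n : nat, (N <= n)%nat ->
      Rabs (INR (d n) - beta1 * r1 ^ n) <= C * (beta1 * r1 ^ n) * (r2 / r1) ^ n.
Proof.
  pose proof (r1_lower r1 Hr1max) as Hr1.
  destruct (MC.factorization r1 Hr1root) as
    (a1 & b1 & a2 & b2 & a3 & b3 & Hroot1 & N1 & N1' & N2 & N2' & N3 & N3' & Hfac).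
  unfold near, ca1, cb1, ca2, cb2, ca3, cb3 in *.
  destruct N1 as [L1 U1]; destruct N1' as [L1' U1']; destruct N2 as [L2 U2];
  destruct N2' as [L2' U2']; destruct N3 as [L3 U3]; destruct N3' as [L3' U3'].
  set (u := fun n => INR (d n)).
  assert (Hrec : forall n, u (n + 7)%nat = u (n + 6)%nat + u (n + 2)%nat + u n).
  { intros n. unfold u. rewrite d_rec, !plus_INR. reflexivity. }
  assert (Hu0 : forall k, 0 <= u k) by (intros k; apply pos_INR).
  assert (Hu6 : 0 < u 6%nat).
  { unfold u. replace (d 6) with 11%nat by (vm_compute; reflexivity). simpl. lra. }
  assert (Hfac' : forall x, x ^ 7 - x ^ 6 - x ^ 2 - 1 =
     (x - r1) * (x ^ 2 - (2 * a1) * x + (a1 ^ 2 + b1 ^ 2)) * (x ^ 2 - (2 * a2) * x + (a2 ^ 2 + b2 ^ 2))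
       * (x ^ 2 - (2 * a3) * x + (a3 ^ 2 + b3 ^ 2))).
  { intros x. pose proof (Hfac x) as H. unfold FQpolyR, qf in H. rewrite H. ring. }
  assert (Hr : r1 ^ 7 - r1 ^ 6 - r1 ^ 2 - 1 = 0) by exact Hr1root.
  assert (Hb1 : 0 < b1) by lra. assert (Hb2 : 0 < b2) by lra. assert (Hb3 : 0 < b3) by lra.
  assert (H21 : a2 ^ 2 + b2 ^ 2 < a1 ^ 2 + b1 ^ 2).
  { assert (a2 * a2 <= 7 / 10) by nra. assert (b2 * b2 <= 3 / 10) by nra.
    assert (a1 * a1 >= 44 / 100) by nra. assert (b1 * b1 >= 67 / 100) by nra. simpl. lra. }
  assert (H31 : a3 ^ 2 + b3 ^ 2 < a1 ^ 2 + b1 ^ 2).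
  { assert (a3 * a3 <= 1 / 100) by nra. assert (b3 * b3 <= 7 / 10) by nra.
    assert (a1 * a1 >= 44 / 100) by nra. assert (b1 * b1 >= 67 / 100) by nra. simpl. lra. }
  destruct (assembly u r1 (2 * a1) (a1 ^ 2 + b1 ^ 2) (2 * a2) (a2 ^ 2 + b2 ^ 2)
              (2 * a3) (a3 ^ 2 + b3 ^ 2) Hrec Hr Hr1 Hfac'
              ltac:(simpl; nra) ltac:(simpl; nra) ltac:(simpl; nra) H21 H31 Hu0 Hu6)
    as [beta [Hbeta [K HK]]].
  assert (Hsig : Cmod (a1, b1) <= r2).
  { apply Hr2max. exact Hroot1. intros E. injection E. intros. lra. }
  unfold Cmod in Hsig. simpl fst in Hsig. simpl snd in Hsig.
  assert (HK0 : 0 <= K).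
  { specialize (HK 0%nat). simpl in HK. pose proof (Rabs_pos (u 0%nat - beta * 1)). lra. }
  assert (Hr10 : 0 < r1) by lra.
  exists beta. split; auto. exists (K / beta), 0%nat. intros n _.
  specialize (HK n). unfold u in HK.
  eapply Rle_trans. exact HK.
  assert (Hs0 : 0 <= sqrt (a1 ^ 2 + b1 ^ 2)) by apply sqrt_pos.
  assert (Hpow : sqrt (a1 ^ 2 + b1 ^ 2) ^ n <= r2 ^ n) by (apply pow_incr; lra).
  replace (K / beta * (beta * r1 ^ n) * (r2 / r1) ^ n) with (K * r2 ^ n).
  - apply Rmult_le_compat_l; auto.
  - replace (r2 ^ n) with ((r2 / r1 * r1) ^ n) by (f_equal; field; lra).
    rewrite Rpow_mult_distr. field. lra.
Qed.
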